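(* Suppose $X$ is spike-free. Let $(W_1,w_2,\lambda)$ be a KKT point (B-subdifferential sense) of the non-convex max-margin problem, and suppose it contains two neurons $i_+,i_-$ with $w_{2,i_\pm}\ne0$ whose associated diagonal matrices satisfy $\hat D_{i_+}\ge\mathrm{diag}(\mathbb I(y=1))$ and $\hat D_{i_-}\ge\mathrm{diag}(\mathbb I(y=-1))$. Then $\lambda$ is dual feasible, i.e. $\max_{u:\|u\|_2\le1}|\lambda^T(Xu)_+|\le1$.
   Context: Binary setting: $X\in\mathbb R^{N\times d}$ rows $x_n$, $y\in\{\pm1\}^N$, $Y=\mathrm{diag}(y)$. $X$ is spike-free if for every $u$ with $\|u\|_2\le1$ there is $z$ with $\|z\|_2\le1$ and $(Xu)_+=Xz$. Non-convex max-margin problem: $\min\frac12(\|W_1\|_F^2+\|w_2\|_2^2)$ s.t. $Y(XW_1)_+w_2\ge\mathbf 1$. KKT point (B-subdifferential): $Y\lambda\ge0$, primal feasibility, $\lambda_n(y_n(x_n^TW_1)_+w_2-1)=0$, $w_2=(XW_1)_+^T\lambda$, and for each $i$, $w_{1,i}=w_{2,i}X^T\hat D_i\lambda$ where $\hat D_i$ is diagonal with $(\hat D_i)_{nn}=1$ if $x_n^Tw_{1,i}>0$, $0$ if $x_n^Tw_{1,i}<0$, $\in\{0,1\}$ if $x_n^Tw_{1,i}=0$. *)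

(* Defs.v *)
From HB Require Import structures.
From mathcomp Require Import all_boot all_order all_algebra.
From mathcomp Require Import reals.
Set Implicit Arguments. Unset Strict Implicit. Unset Printing Implicit Defensive.
Import Order.TTheory GRing.Theory Num.Theory.
Local Open Scope ring_scope.

Section Defs.
Variable R : realType.

Definition relu_mx (p q : nat) (A : 'M[R]_(p, q)) : 'M[R]_(p, q) :=
  map_mx (fun x => Num.max x 0) A.

Definition l2norm (k : nat) (u : 'cV[R]_k) : R :=
  Num.sqrt (\sum_(j < k) u j 0 ^+ 2).

Definition spike_free (N d : nat) (X : 'M[R]_(N, d)) : Prop :=
  forall u : 'cV[R]_d, l2norm u <= 1 ->
    exists z : 'cV[R]_d, l2norm z <= 1 /\ relu_mx (X *m u) = X *m z.

Definition diag_of (N : nat) (b : 'I_N -> bool) : 'M[R]_N :=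
  diag_mx (\row_n (b n)%:R).

(* KKT point (B-subdifferential sense) of
   min 1/2(||W1||_F^2 + ||w2||^2) s.t. Y (X W1)_+ w2 >= 1,
   with the family of diagonal matrices Dhat_i encoded by D i. *)
Definition kkt_point (N d m : nat) (X : 'M[R]_(N, d)) (y : 'cV[R]_N)
    (W1 : 'M[R]_(d, m)) (w2 : 'cV[R]_m) (lam : 'cV[R]_N)
    (D : 'I_m -> 'I_N -> bool) : Prop :=
      (forall n, 0 <= y n 0 * lam n 0) /\
      (forall n, 1 <= y n 0 * (relu_mx (X *m W1) *m w2) n 0) /\
      (forall n, lam n 0 * (y n 0 * (relu_mx (X *m W1) *m w2) n 0 - 1) = 0) /\
      w2 = (relu_mx (X *m W1))^T *m lam /\
      (forall i, col i W1 = w2 i 0 *: (X^T *m diag_of (D i) *m lam)) /\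
      forall i n, ((0 < (X *m W1) n i) ==> D i n)
                  && (((X *m W1) n i < 0) ==> ~~ D i n).

Definition dual_feasible (N d : nat) (X : 'M[R]_(N, d)) (lam : 'cV[R]_N) : Prop :=
  forall u : 'cV[R]_d, l2norm u <= 1 -> `|(lam^T *m relu_mx (X *m u)) 0 0| <= 1.

End Defs.

(* Main.v *)
Require Import Defs.
From HB Require Import structures.
From mathcomp Require Import all_boot all_order all_algebra.
From mathcomp Require Import reals.
From mathcomp Require Import ring lra.
Import Order.TTheory GRing.Theory Num.Theory.
Local Open Scope ring_scope.

Section Aux.
Variable R : realType.

Lemma diag_ofE (N : nat) (b : 'I_N -> bool) (v : 'cV[R]_N) n :
  (diag_of R b *m v) n 0 = (b n)%:R * v n 0.
Proof. by rewrite /diag_of mul_diag_mx !mxE. Qed.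

Lemma relu_sign (x : R) (b : bool) :
  ((0 < x) ==> b) && ((x < 0) ==> ~~ b) -> Num.max x 0 = b%:R * x.
Proof.
case: b => /andP [h1 h2].
  have hx : 0 <= x by rewrite leNgt; apply/negP => /(implyP h2).
  by rewrite max_l // mul1r.
have hx : x <= 0 by rewrite leNgt; apply/negP => /(implyP h1).
by rewrite max_r // mul0r.
Qed.

Lemma sum_sq_le1 (k : nat) (z : 'cV[R]_k) : l2norm z <= 1 ->
  \sum_(j < k) z j 0 ^+ 2 <= 1.
Proof.
rewrite /l2norm => h.
have h0 : 0 <= \sum_(j < k) z j 0 ^+ 2 by apply: sumr_ge0 => j _; apply: sqr_ge0.
rewrite -(sqr_sqrtr h0).
have hs : 0 <= Num.sqrt (\sum_(j < k) z j 0 ^+ 2) by apply: sqrtr_ge0.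
move: h hs; set s := Num.sqrt _ => h hs.
rewrite expr2; nra.
Qed.

Lemma cs_bound (k : nat) (a z : 'cV[R]_k) :
  \sum_(j < k) a j 0 ^+ 2 = 1 -> \sum_(j < k) z j 0 ^+ 2 <= 1 ->
  -1 <= \sum_(j < k) a j 0 * z j 0 <= 1.
Proof.
move=> ha hz.
have e1 : \sum_(j < k) (a j 0 - z j 0) ^+ 2 =
   \sum_(j < k) a j 0 ^+ 2 + \sum_(j < k) z j 0 ^+ 2 - 2 * \sum_(j < k) a j 0 * z j 0.
  rewrite mulr_sumr -big_split -sumrB /=; apply: eq_bigr => j _; ring.
have e2 : \sum_(j < k) (a j 0 + z j 0) ^+ 2 =
   \sum_(j < k) a j 0 ^+ 2 + \sum_(j < k) z j 0 ^+ 2 + 2 * \sum_(j < k) a j 0 * z j 0.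
  rewrite mulr_sumr -!big_split /=; apply: eq_bigr => j _; ring.
have p1 : 0 <= \sum_(j < k) (a j 0 - z j 0) ^+ 2 by apply: sumr_ge0 => j _; apply: sqr_ge0.
have p2 : 0 <= \sum_(j < k) (a j 0 + z j 0) ^+ 2 by apply: sumr_ge0 => j _; apply: sqr_ge0.
rewrite e1 in p1; rewrite e2 in p2.
apply/andP; split; lra.
Qed.

End Aux.

Theorem proposition5 (R : realType) (N d m : nat)
    (X : 'M[R]_(N, d)) (y : 'cV[R]_N)
    (W1 : 'M[R]_(d, m)) (w2 : 'cV[R]_m) (lam : 'cV[R]_N)
    (D : 'I_m -> 'I_N -> bool) (ip im : 'I_m) :
  (forall n, y n 0 = 1 \/ y n 0 = -1) ->
  spike_free X ->
  kkt_point X y W1 w2 lam D ->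
  ip != im -> w2 ip 0 != 0 -> w2 im 0 != 0 ->
  (forall n, y n 0 = 1 -> D ip n) ->
  (forall n, y n 0 = -1 -> D im n) ->
  dual_feasible X lam.
Proof.
move=> hy hsf [hyl [_ [_ [hw2 [hw1 hD]]]]] _ hp hm hDp hDm.
pose a i := X^T *m diag_of R (D i) *m lam.
have aE : forall i k, a i k 0 = \sum_n X n k * ((D i n)%:R * lam n 0).
  move=> i k; rewrite /a -mulmxA mxE; apply: eq_bigr => n _.
  by rewrite diag_ofE mxE.
have XW : forall n i, (X *m W1) n i = w2 i 0 * \sum_k X n k * a i k 0.
  move=> n i; rewrite mxE mulr_sumr; apply: eq_bigr => k _.
  have := congr1 (fun M : 'cV_d => M k 0) (hw1 i); rewrite /= !mxE => ->.
  by rewrite /a; ring.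
have key : forall i, w2 i 0 != 0 -> \sum_(k < d) a i k 0 ^+ 2 = 1.
  move=> i hi.
  have e : w2 i 0 = w2 i 0 * \sum_(k < d) a i k 0 ^+ 2.
    rewrite {1}hw2 mxE.
    transitivity (\sum_n w2 i 0 * (((D i n)%:R * lam n 0) * \sum_k X n k * a i k 0)).
      apply: eq_bigr => n _; rewrite [(relu_mx _)^T _ _]mxE /relu_mx [map_mx _ _ _ _]mxE (@relu_sign R _ _ (hD i n)) XW; ring.
    rewrite -mulr_sumr; congr (_ * _).
    transitivity (\sum_n \sum_k a i k 0 * (X n k * ((D i n)%:R * lam n 0))).
      apply: eq_bigr => n _; rewrite mulr_sumr; apply: eq_bigr => k _; ring.
    rewrite exchange_big /=; apply: eq_bigr => k _.
    by rewrite -mulr_sumr -aE expr2.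
  apply/eqP; rewrite -(inj_eq (mulfI hi)) mulr1; exact/eqP/esym.
have lin : forall i (z : 'cV[R]_d),
    \sum_n (D i n)%:R * lam n 0 * (X *m z) n 0 = \sum_k a i k 0 * z k 0.
  move=> i z.
  transitivity (\sum_n \sum_k (X n k * ((D i n)%:R * lam n 0)) * z k 0).
    apply: eq_bigr => n _; rewrite mxE mulr_sumr; apply: eq_bigr => k _; ring.
  rewrite exchange_big /=; apply: eq_bigr => k _.
  by rewrite aE mulr_suml.
move=> u hu.
have [z [hz hrel]] := hsf u hu.
have hz2 := @sum_sq_le1 R _ z hz.
have vge0 : forall n, 0 <= (X *m z) n 0.
  move=> n; rewrite -hrel /relu_mx [map_mx _ _ _ _]mxE le_max lexx orbT //=.
have E : (lam^T *m relu_mx (X *m u)) 0 0 = \sum_n lam n 0 * (X *m z) n 0.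
  by rewrite hrel mxE; apply: eq_bigr => n _; rewrite mxE.
rewrite E.
have [lo hi] : -1 <= \sum_n lam n 0 * (X *m z) n 0 /\
               \sum_n lam n 0 * (X *m z) n 0 <= 1.
  split.
    have /andP [h1 _] := @cs_bound R _ _ _ (key im hm) hz2.
    apply: le_trans h1 _; rewrite -lin; apply: ler_sum => n _.
    have := hyl n; have := vge0 n.
    case: (hy n) => hyn; case hd: (D im n) => /=; rewrite ?mul1r ?mul0r ?hyn => h1 h2;
    try (by move: (hDm n hyn); rewrite hd);
    rewrite ?mul1r in h2; by [|apply: mulr_ge0].
  have /andP [_ h2] := @cs_bound R _ _ _ (key ip hp) hz2.
  apply: le_trans h2; rewrite -lin; apply: ler_sum => n _.
  have := hyl n; have := vge0 n.
  case: (hy n) => hyn; case hd: (D ip n) => /=; rewrite ?mul1r ?mul0r ?hyn => h1 h2;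
  try (by move: (hDp n hyn); rewrite hd);
  rewrite ?mulN1r ?oppr_ge0 in h2; by [|apply: mulr_le0_ge0].
by rewrite ler_norml lo hi.
Qed.
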